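(* Let $\mathcal{L}$ be a finite algebraic language, $\mathcal{V}$ an equational class of $\mathcal{L}$-algebras, and $\Sigma$ a finite $\mathcal{V}$-unifiable set of $\mathcal{L}$-identities. Then for any finite set of variables $X\supseteq\mathrm{Var}(\Sigma)$, \[\mathrm{type}\bigl(\mathsf{E}_{\mathcal{V}}(\Sigma,X)\bigr)=\mathrm{type}\bigl(\mathsf{C}_{\mathcal{V}}(\mathbf{Fp}_{\mathcal{V}}(\Sigma,X))\bigr).\] Hence the exact type and the algebraic exact type of $\mathcal{V}$ coincide.
   Context: $\mathbf{Fm}_{\mathcal{L}}(Y)$ is the formula algebra over variables $Y$ ($\omega$ = all variables); substitutions are homomorphisms of formula algebras; $\mathrm{Var}(\Gamma)$ is the set of variables in $\Gamma$. $\mathbf{F}_{\mathcal{V}}(Y)$ is the free algebra of $\mathcal{V}$ over $Y$, $h_{\mathcal{V}}\colon\mathbf{Fm}_{\mathcal{L}}(Y)\to\mathbf{F}_{\mathcal{V}}(Y)$ the canonical homomorphism. A substitution $\sigma\colon\mathbf{Fm}_{\mathcal{L}}(X)\to\mathbf{Fm}_{\mathcal{L}}(\omega)$ is a $\mathcal{V}$-unifier of $\Sigma$ (over $X$) if $\mathcal{V}\models\sigma(\varphi)\approx\sigma(\psi)$ for all $\varphi\approx\psi\in\Sigma$; $\Sigma$ is $\mathcal{V}$-unifiable if it has one. $\sigma_2\sqsubseteq_{\mathcal{V}}\sigma_1$ iff $\ker(h_{\mathcal{V}}\circ\sigma_1)\subseteq\ker(h_{\mathcal{V}}\circ\sigma_2)$;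 $\mathsf{E}_{\mathcal{V}}(\Sigma,X)$ is the set of $\mathcal{V}$-unifiers of $\Sigma$ over $X$ preordered by $\sqsubseteq_{\mathcal{V}}$. $\mathbf{Fp}_{\mathcal{V}}(\Sigma,X)=\mathbf{F}_{\mathcal{V}}(X)/\Theta_\Sigma$, $\Theta_\Sigma$ the congruence generated by $\{(h_{\mathcal{V}}(\varphi),h_{\mathcal{V}}(\psi))\mid\varphi\approx\psi\in\Sigma\}$; $\mathsf{FP}(\mathcal{V})$ is the class of finitely presented algebras of $\mathcal{V}$. An algebra is exact in $\mathcal{V}$ if it is isomorphic to a finitely generated subalgebra of $\mathbf{F}_{\mathcal{V}}(\omega)$. For $\mathbf{A}\in\mathsf{FP}(\mathcal{V})$, a coexact unifier of $\mathbf{A}$ is an onto homomorphism $u\colon\mathbf{A}\to\mathbf{E}$ with $\mathbf{E}$ exact in $\mathcal{V}$; for coexact unifiers $u_i\colon\mathbf{A}\to\mathbf{E}_i$, $u_2\le u_1$ iff there is a homomorphism $f\colon\mathbf{E}_1\to\mathbf{E}_2$ with $f\circ u_1=u_2$; $\mathsf{C}_{\mathcal{V}}(\mathbf{A})$ is the set of coexact unifiers of $\mathbf{A}$ preordered by $\le$. Types of a nonempty preordered set $(P,\le)$: a complete set is $M\subseteq P$ with each $x\in P$ below some $y\in M$; a $\mu$-set is a complete set of pairwise incomparable elements; type is $0$ if no $\mu$-set exists, $\infty$ if an infinite $\mu$-set exists, $\omega$ if a finite $\mu$-set of size $>1$ exists, $1$ if a $\mu$-set of size $1$ exists; ordered $1<\omega<\infty<0$.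 The exact type of $\mathcal{V}$ is the maximal $\mathrm{type}(\mathsf{E}_{\mathcal{V}}(\Sigma,\mathrm{Var}(\Sigma)))$ over $\mathcal{V}$-unifiable finite $\Sigma$; the algebraic exact type of $\mathcal{V}$ is the maximal $\mathrm{type}(\mathsf{C}_{\mathcal{V}}(\mathbf{A}))$ over $\mathbf{A}\in\mathsf{FP}(\mathcal{V})$ with $\mathsf{C}_{\mathcal{V}}(\mathbf{A})\neq\emptyset$. *)

(* Defs.v *)
From mathcomp Require Import all_boot.
From Stdlib Require Import ClassicalEpsilon.
Set Implicit Arguments. Unset Strict Implicit. Unset Printing Implicit Defensive.

Record language := Language { op : Type; arity : op -> nat }.

Definition finite_language (L : language) : Prop :=
  exists l : seq (op L), forall o, List.In o l.

Section Terms.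
Variable L : language.

Inductive term (Y : Type) : Type :=
| Var of Y
| App (o : op L) of ('I_(arity o) -> term Y).
Arguments Var {Y}.
Arguments App {Y} o _.

Record algebra := Algebra {
  carrier :> Type;
  interp : forall o : op L, ('I_(arity o) -> carrier) -> carrier }.
Arguments interp a o _ : clear implicits.

Fixpoint eval (A : algebra) (Y : Type) (e : Y -> A) (t : term Y) : A :=
  match t with
  | Var y => e y
  | App o a => interp A o (fun i => eval e (a i))
  end.

Fixpoint tsubst (Y Z : Type) (s : Y -> term Z) (t : term Y) : term Z :=
  match t with
  | Var y => s y
  | App o a => App o (fun i => tsubst s (a i))
  end.

Definition rename (Y Z : Type) (f : Y -> Z) : term Y -> term Z :=
  tsubst (fun y => Var (f y)).

Fixpoint occurs (Y : Type) (y : Y) (t : term Y) : Prop :=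
  match t with
  | Var z => z = y
  | App o a => exists i, occurs y (a i)
  end.

Definition term_alg (Y : Type) : algebra := Algebra (@App Y).

Definition is_hom (A B : algebra) (f : A -> B) : Prop :=
  forall o (a : 'I_(arity o) -> A), f (interp A o a) = interp B o (fun i => f (a i)).

Definition isomorphic (A B : algebra) : Prop :=
  exists f : A -> B, is_hom f /\ bijective f.

Definition congruence (A : algebra) (R : A -> A -> Prop) : Prop :=
  [/\ (forall x, R x x), (forall x y, R x y -> R y x),
      (forall x y z, R x y -> R y z -> R x z) &
      (forall o (a b : 'I_(arity o) -> A), (forall i, R (a i) (b i)) ->
           R (interp A o a) (interp A o b))].

Definition Cg (A : algebra) (R : A -> A -> Prop) (x y : A) : Prop :=
  forall th : A -> A -> Prop, congruence th -> (forall u v, R u v -> th u v) -> th x y.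

Definition qcarrier (A : algebra) (R : A -> A -> Prop) : Type :=
  {P : A -> Prop | exists a, P = R a}.

Definition qcls (A : algebra) (R : A -> A -> Prop) (a : A) : qcarrier R :=
  exist _ (R a) (ex_intro _ a erefl).

Definition qrep (A : algebra) (R : A -> A -> Prop) (c : qcarrier R) : A :=
  proj1_sig (constructive_indefinite_description _ (proj2_sig c)).

(* the quotient algebra A / R (meaningful when R is a congruence) *)
Definition quot (A : algebra) (R : A -> A -> Prop) : algebra :=
  @Algebra (qcarrier R)
    (fun o (c : 'I_(arity o) -> qcarrier R) =>
       qcls R (interp A o (fun i => qrep (c i)))).

(* an equational class is given by a set Id of identities over omega = nat *)
Definition in_class (Id : term nat -> term nat -> Prop) (A : algebra) : Prop :=
  forall p q, Id p q -> forall e : nat -> A, eval e p = eval e q.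

Definition Vequiv (Id : term nat -> term nat -> Prop) (Y : Type) (p q : term Y) : Prop :=
  forall A : algebra, in_class Id A -> forall e : Y -> A, eval e p = eval e q.

Definition free (Id : term nat -> term nat -> Prop) (Y : Type) : algebra :=
  @quot (term_alg Y) (@Vequiv Id Y).

Definition hV (Id : term nat -> term nat -> Prop) (Y : Type) (t : term Y) : free Id Y :=
  @qcls (term_alg Y) (@Vequiv Id Y) t.

Definition vset (X : seq nat) : Type := {x : nat | x \in X}.

Definition vval (X : seq nat) (x : vset X) : nat := proj1_sig x.

Definition sig_vars (S : seq (term nat * term nat)) (x : nat) : Prop :=
  exists pq, List.In pq S /\ (occurs x pq.1 \/ occurs x pq.2).

Definition unifiable (Id : term nat -> term nat -> Prop)
    (S : seq (term nat * term nat)) : Prop :=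
  exists s : nat -> term nat,
    forall pq, List.In pq S -> Vequiv Id (tsubst s pq.1) (tsubst s pq.2).

Definition is_unifier (Id : term nat -> term nat -> Prop)
    (S : seq (term nat * term nat)) (X : seq nat) (s : vset X -> term nat) : Prop :=
  forall p q : term (vset X),
    List.In (rename (@vval X) p, rename (@vval X) q) S ->
    Vequiv Id (tsubst s p) (tsubst s q).

Definition Unif (Id : term nat -> term nat -> Prop)
    (S : seq (term nat * term nat)) (X : seq nat) : Type :=
  {s : vset X -> term nat | @is_unifier Id S X s}.

Definition uleq (Id : term nat -> term nat -> Prop)
    (S : seq (term nat * term nat)) (X : seq nat) (s2 s1 : Unif Id S X) : Prop :=
  forall p q : term (vset X),
    hV Id (tsubst (proj1_sig s1) p) = hV Id (tsubst (proj1_sig s1) q) ->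
    hV Id (tsubst (proj1_sig s2) p) = hV Id (tsubst (proj1_sig s2) q).

Definition Sigma_pairs (Id : term nat -> term nat -> Prop)
    (S : seq (term nat * term nat)) (X : seq nat) (x y : free Id (vset X)) : Prop :=
  exists p q : term (vset X),
    [/\ List.In (rename (@vval X) p, rename (@vval X) q) S, x = hV Id p & y = hV Id q].

Definition Fp (Id : term nat -> term nat -> Prop)
    (S : seq (term nat * term nat)) (X : seq nat) : algebra :=
  @quot (free Id (vset X)) (Cg (@Sigma_pairs Id S X)).

Definition is_fp (Id : term nat -> term nat -> Prop) (A : algebra) : Prop :=
  exists (S : seq (term nat * term nat)) (X : seq nat),
    (forall x, sig_vars S x -> x \in X) /\ isomorphic (Fp Id S X) A.

Definition sg (A : algebra) (g : seq A) (x : A) : Prop :=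
  forall P : A -> Prop, (forall y, List.In y g -> P y) ->
    (forall o (a : 'I_(arity o) -> A), (forall i, P (a i)) -> P (interp A o a)) ->
    P x.

Lemma sg_closed (A : algebra) (g : seq A) o (a : 'I_(arity o) -> A) :
  (forall i, sg g (a i)) -> sg g (interp A o a).
Proof. move=> H P Hg Hc; apply: (Hc) => i; exact: (H i P Hg Hc). Qed.

Definition subalg (A : algebra) (g : seq A) : algebra :=
  @Algebra {x : A | sg g x}
    (fun o (a : 'I_(arity o) -> {x : A | sg g x}) =>
       exist _ (interp A o (fun i => proj1_sig (a i)))
             (sg_closed (fun i => proj2_sig (a i)))).

Definition exact (Id : term nat -> term nat -> Prop) (E : algebra) : Prop :=
  exists g : seq (free Id nat), isomorphic E (subalg g).

Definition Coexact (Id : term nat -> term nat -> Prop) (A : algebra) : Type :=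
  {E : algebra & {u : A -> E | [/\ is_hom u, (forall y, exists x, u x = y) & exact Id E]}}.

Definition cleq (Id : term nat -> term nat -> Prop) (A : algebra)
    (c2 c1 : Coexact Id A) : Prop :=
  exists f : projT1 c1 -> projT1 c2,
    is_hom f /\ forall a, f (proj1_sig (projT2 c1) a) = proj1_sig (projT2 c2) a.

End Terms.

Inductive utype := t_one | t_omega | t_infty | t_zero.

Definition utype_rank (t : utype) : nat :=
  match t with t_one => 0 | t_omega => 1 | t_infty => 2 | t_zero => 3 end.

Definition utype_le (t1 t2 : utype) : Prop := (utype_rank t1 <= utype_rank t2)%N.

Section Types.
Variables (P : Type) (le : P -> P -> Prop).

Definition complete_set (M : P -> Prop) : Prop :=
  forall x, exists y, M y /\ le x y.

Definition mu_set (M : P -> Prop) : Prop :=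
  complete_set M /\ forall x y, M x -> M y -> x <> y -> ~ le x y.

Definition finite_pset (M : P -> Prop) : Prop :=
  exists l : seq P, forall x, M x -> List.In x l.

Definition has_type (t : utype) : Prop :=
  match t with
  | t_zero => ~ exists M, mu_set M
  | t_infty => exists M, mu_set M /\ ~ finite_pset M
  | t_omega => exists M, [/\ mu_set M, finite_pset M & exists x y, [/\ M x, M y & x <> y]]
  | t_one => exists M, mu_set M /\ exists x, forall y, M y <-> y = x
  end.
End Types.

Definition exact_type (L : language) (Id : term L nat -> term L nat -> Prop)
    (t : utype) : Prop :=
  (exists (S : seq (term L nat * term L nat)) (X : seq nat),
     [/\ unifiable Id S, (forall x, x \in X <-> sig_vars S x) &
         has_type (@uleq L Id S X) t]) /\
  (forall (S : seq (term L nat * term L nat)) (X : seq nat) (t' : utype),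
     unifiable Id S -> (forall x, x \in X <-> sig_vars S x) ->
     has_type (@uleq L Id S X) t' -> utype_le t' t).

Definition alg_exact_type (L : language) (Id : term L nat -> term L nat -> Prop)
    (t : utype) : Prop :=
  (exists A : algebra L,
     [/\ is_fp Id A, inhabited (Coexact Id A) & has_type (@cleq L Id A) t]) /\
  (forall (A : algebra L) (t' : utype),
     is_fp Id A -> inhabited (Coexact Id A) -> has_type (@cleq L Id A) t' ->
     utype_le t' t).

(* Main.v *)
Require Import Defs.
From mathcomp Require Import all_boot.
From Stdlib Require Import ClassicalEpsilon FunctionalExtensionality PropExtensionality ProofIrrelevance Classical.
Set Implicit Arguments. Unset Strict Implicit. Unset Printing Implicit Defensive.

Lemma sig_eqP (A : Type) (P : A -> Prop) (x y : sig P) :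
  proj1_sig x = proj1_sig y -> x = y.
Proof. case: x => a Ha; case: y => b Hb /= E; subst b; f_equal; apply: proof_irrelevance. Qed.

Lemma choiceF (I B : Type) (P : I -> B -> Prop) :
  (forall i, exists b, P i b) -> exists f : I -> B, forall i, P i (f i).
Proof.
move=> H; exists (fun i => proj1_sig (constructive_indefinite_description _ (H i))).
move=> i; by case: constructive_indefinite_description.
Qed.

Section Quot.
Variables (L : language) (A : algebra L) (R : A -> A -> Prop).

Lemma qrep_def (c : qcarrier R) : proj1_sig c = R (qrep c).
Proof. by rewrite /qrep; case: constructive_indefinite_description. Qed.

Lemma qcls_qrep (c : qcarrier R) : qcls R (qrep c) = c.
Proof. apply: sig_eqP => /=; by rewrite qrep_def. Qed.

Lemma qcls_surj (c : qcarrier R) : exists a, c = qcls R a.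
Proof. by exists (qrep c); rewrite qcls_qrep. Qed.

Hypotheses (Rr : forall x, R x x) (Rs : forall x y, R x y -> R y x)
  (Rt : forall x y z, R x y -> R y z -> R x z).

Lemma qcls_eq a b : qcls R a = qcls R b <-> R a b.
Proof.
split.
  move/(f_equal (@proj1_sig _ _)) => /= E; rewrite E; exact: Rr.
move=> H; apply: sig_eqP => /=; apply: functional_extensionality => x.
apply: propositional_extensionality; split => H1; [exact: Rt (Rs H) H1 | exact: Rt H H1].
Qed.

Lemma qrep_qcls a : R (qrep (qcls R a)) a.
Proof. apply: Rs; move: (Rr (qrep (qcls R a))); by rewrite -qrep_def. Qed.
End Quot.

Section CgS.
Variables (L : language) (A : algebra L) (R : A -> A -> Prop).
Lemma Cg_cong : congruence (Cg R).
Proof.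
split.
- by move=> x th [Hr _ _ _].
- by move=> x y H th Hc HR; case: (Hc) => _ Hs _ _; apply: Hs; apply: H.
- by move=> x y z H1 H2 th Hc HR; case: (Hc) => _ _ Ht _; apply: Ht (H1 _ Hc HR) (H2 _ Hc HR).
- move=> o a b H th Hc HR; case: (Hc) => _ _ _ Hm; apply: Hm => i; exact: H.
Qed.
Lemma Cg_incl x y : R x y -> Cg R x y.
Proof. by move=> H th _ HR; apply: HR. Qed.
Lemma Cg_r x : Cg R x x. Proof. by case: Cg_cong. Qed.
Lemma Cg_s x y : Cg R x y -> Cg R y x. Proof. by case: Cg_cong => _ h _ _; apply: h. Qed.
Lemma Cg_t x y z : Cg R x y -> Cg R y z -> Cg R x z. Proof. by case: Cg_cong => _ _ h _; apply: h. Qed.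
End CgS.

Section TermsL.
Variable L : language.
Variable Id : term L nat -> term L nat -> Prop.

Lemma eval_tsubst (A : algebra L) Y Z (e : Z -> A) (s : Y -> term L Z) t :
  eval e (tsubst s t) = eval (fun y => eval e (s y)) t.
Proof.
elim: t => [y|o a IH] //=; f_equal; apply: functional_extensionality => i; exact: IH.
Qed.

Lemma tsubst_rename Y Z W (f : Y -> Z) (s : Z -> term L W) t :
  tsubst s (rename f t) = tsubst (fun y => s (f y)) t.
Proof.
elim: t => [y|o a IH] //=; f_equal; apply: functional_extensionality => i; exact: IH.
Qed.

Section VY.
Variable Y : Type.
Lemma V_refl (p : term L Y) : Vequiv Id p p. Proof. by []. Qed.
Lemma V_sym (p q : term L Y) : Vequiv Id p q -> Vequiv Id q p.
Proof. by move=> H B HB e; rewrite H. Qed.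
Lemma V_trans (p q r : term L Y) : Vequiv Id p q -> Vequiv Id q r -> Vequiv Id p r.
Proof. by move=> H1 H2 B HB e; rewrite H1 ?H2. Qed.
Lemma V_app o (a b : 'I_(arity o) -> term L Y) :
  (forall i, Vequiv Id (a i) (b i)) -> Vequiv Id (App a) (App b).
Proof.
move=> H B HB e /=; f_equal; apply: functional_extensionality => i; exact: H.
Qed.

Lemma hV_eq (p q : term L Y) : hV Id p = hV Id q <-> Vequiv Id p q.
Proof. apply: qcls_eq; [exact: V_refl | exact: V_sym | exact: V_trans]. Qed.

Lemma hV_qrep (t : term L Y) : Vequiv Id (qrep (hV Id t)) t.
Proof. apply: qrep_qcls; [exact: V_refl | exact: V_sym]. Qed.

Lemma hV_hom o (ts : 'I_(arity o) -> term L Y) :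
  hV Id (App ts) = @interp _ (free Id Y) o (fun i => hV Id (ts i)).
Proof.
change (hV Id (App ts) = hV Id (App (fun i => qrep (hV Id (ts i))))).
apply/hV_eq; apply: V_app => i; apply: V_sym; exact: hV_qrep.
Qed.

Lemma hV_surj (c : free Id Y) : exists t, c = hV Id t.
Proof. exact: (@qcls_surj _ (term_alg L Y) (@Vequiv L Id Y) c). Qed.
End VY.

Lemma V_subst Y Z (s : Y -> term L Z) (p q : term L Y) :
  Vequiv Id p q -> Vequiv Id (tsubst s p) (tsubst s q).
Proof. by move=> H B HB e; rewrite !eval_tsubst; apply: H. Qed.

End TermsL.

Section TypeTransfer.
Variables (P Q : Type) (leP : P -> P -> Prop) (leQ : Q -> Q -> Prop) (F : P -> Q).
Hypotheses (Fmono : forall x y, leP x y <-> leQ (F x) (F y))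
  (Fcof : forall q, exists x, leQ q (F x))
  (Qr : forall q, leQ q q) (Qt : forall a b c, leQ a b -> leQ b c -> leQ a c).

Definition img (M : P -> Prop) (q : Q) := exists x, M x /\ q = F x.

Lemma mu_img M : mu_set leP M -> mu_set leQ (img M).
Proof.
case=> Hc Hi; split.
- move=> q; case: (Fcof q) => x Hx; case: (Hc x) => y [My Hxy].
  exists (F y); split; first by exists y. apply: Qt Hx _; exact/Fmono.
- move=> _ _ [x [Mx ->]] [y [My ->]] Hne Hle.
  have Hxy : x <> y by move=> E; apply: Hne; rewrite E.
  exact: (Hi x y Mx My Hxy (proj2 (Fmono x y) Hle)).
Qed.

Lemma mu_inj M : mu_set leP M -> forall x y, M x -> M y -> F x = F y -> x = y.
Proof.
case=> _ Hi x y Mx My E; apply: NNPP => Hne; apply: (Hi x y Mx My Hne); apply/Fmono; rewrite E; exact: Qr.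
Qed.

Lemma fin_img M : finite_pset M -> finite_pset (img M).
Proof. case=> l Hl; exists (List.map F l) => _ [x [Mx ->]]; apply: List.in_map; exact: Hl. Qed.

Lemma fin_pre M : (forall x y, M x -> M y -> F x = F y -> x = y) ->
  finite_pset (img M) -> finite_pset M.
Proof.
move=> Hinj [l Hl].
suff: forall l (M' : P -> Prop), (forall x, M' x -> M x) ->
    (forall x, M' x -> List.In (F x) l) -> finite_pset M'.
  by apply => // x Mx; apply: Hl; exists x.
elim=> [|y l' IH] M' HM' Hin.
  by exists nil => x /Hin.
case: (classic (exists x, M' x /\ F x = y)) => [[x [M'x Ex]] | Hn].
  case: (IH (fun z => M' z /\ z <> x)).
  - by move=> z [/HM'].
  - move=> z [M'z Hzx]; case: (Hin z M'z) => // Ez; exfalso; apply: Hzx.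
    apply: Hinj; [exact: HM' | exact: HM' | by rewrite -Ez Ex].
  move=> l2 Hl2; exists (x :: l2) => z M'z.
  case: (classic (z = x)) => [->|Hzx]; [by left | right; exact: Hl2].
apply: (IH M') => // z M'z; case: (Hin z M'z) => // Ez; exfalso; apply: Hn; by exists z.
Qed.

Lemma has_type_img t : t <> t_zero -> has_type leP t -> has_type leQ t.
Proof.
case: t => // _ /=.
- case=> M [Hmu [x Hx]]; exists (img M); split; first exact: mu_img.
  exists (F x) => q; split; first by case=> y [/Hx -> ->].
  by move=> ->; exists x; split => //; apply/Hx.
- case=> M [Hmu Hfin [x [y [Mx My Hne]]]]; exists (img M); split.
  + exact: mu_img.
  + exact: fin_img.
  + exists (F x), (F y); split; [by exists x | by exists y|].
    by move/(mu_inj Hmu Mx My).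
- case=> M [Hmu Hnf]; exists (img M); split; first exact: mu_img.
  by move=> Hf; apply: Hnf; apply: fin_pre => //; apply: mu_inj.
Qed.
End TypeTransfer.

Lemma kernel_transfer (P Q T : Type) (leP : P -> P -> Prop) (leQ : Q -> Q -> Prop)
  (kP : P -> T -> T -> Prop) (kQ : Q -> T -> T -> Prop)
  (HP : forall x y, leP x y <-> (forall a b, kP y a b -> kP x a b))
  (HQ : forall x y, leQ x y <-> (forall a b, kQ y a b -> kQ x a b))
  (F : P -> Q) (G : Q -> P)
  (HF : forall x a b, kQ (F x) a b <-> kP x a b)
  (HG : forall q a b, kP (G q) a b <-> kQ q a b) :
  forall t, has_type leP t <-> has_type leQ t.
Proof.
have FmP : forall x y, leP x y <-> leQ (F x) (F y).
  move=> x y; rewrite HP HQ; split=> H a b.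
    by move=> /HF /H /HF.
  by move=> /(HF y) /(H a b) /(HF x).
have GmP : forall x y, leQ x y <-> leP (G x) (G y).
  move=> x y; rewrite HP HQ; split=> H a b.
    by move=> /(HG y) /(H a b) /(HG x).
  by move=> /HG /H /HG.
have FcP : forall q, exists x, leQ q (F x).
  by move=> q; exists (G q); apply/HQ => a b /HF /HG.
have GcP : forall q, exists x, leP q (G x).
  by move=> q; exists (F q); apply/HP => a b /HG /HF.
have Qr : forall q, leQ q q by move=> q; apply/HQ.
have Pr : forall q, leP q q by move=> q; apply/HP.
have Qt : forall a b c, leQ a b -> leQ b c -> leQ a c.
  move=> a b c /HQ H1 /HQ H2; apply/HQ => x y /H2 /H1 //.
have Pt : forall a b c, leP a b -> leP b c -> leP a c.
  move=> a b c /HP H1 /HP H2; apply/HP => x y /H2 /H1 //.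
case.
- split; apply: has_type_img => //.
- split; apply: has_type_img => //.
- split; apply: has_type_img => //.
- split=> H [N HN]; apply: H.
  + by exists (img G N); apply: mu_img.
  + by exists (img F N); apply: mu_img.
Qed.

Lemma enum_ex (X : seq nat) : exists l : seq (vset X), forall x, List.In x l.
Proof.
suff H : forall Y : seq nat, (forall n, n \in Y -> n \in X) ->
  exists l : seq (vset X), forall x, vval x \in Y -> List.In x l.
  case: (H X) => // l Hl; exists l => x; apply: Hl; by case: x.
elim=> [|a Y IH] HY; first by exists nil.
case: IH => [n Hn|l Hl]; first by apply: HY; rewrite in_cons Hn orbT.
have Ha : a \in X by apply: HY; rewrite in_cons eqxx.
exists (exist _ a Ha :: l) => x; rewrite in_cons => /orP [/eqP E|Hx].
  by left; apply: sig_eqP.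
by right; apply: Hl.
Qed.

Definition enumX (X : seq nat) : seq (vset X) :=
  proj1_sig (constructive_indefinite_description _ (enum_ex X)).
Lemma enumX_all X x : List.In x (enumX X).
Proof. rewrite /enumX; by case: constructive_indefinite_description. Qed.

Section Core.
Variables (L : language) (Id : term L nat -> term L nat -> Prop)
  (S : seq (term L nat * term L nat)) (X : seq nat).
Variables (A : algebra L) (rho : term L (vset X) -> A).
Hypotheses
  (rho_hom : forall o (ts : 'I_(arity o) -> term L (vset X)),
      rho (App ts) = @interp _ A o (fun i => rho (ts i)))
  (rho_surj : forall a, exists p, a = rho p)
  (rho_ker : forall (s : vset X -> term L nat), is_unifier Id S s -> forall p q,
      rho p = rho q -> hV Id (tsubst s p) = hV Id (tsubst s q))
  (rho_S : forall p q, List.In (rename (@vval X) p, rename (@vval X) q) S -> rho p = rho q).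

Definition kU (s : Unif Id S X) (p q : term L (vset X)) :=
  hV Id (tsubst (proj1_sig s) p) = hV Id (tsubst (proj1_sig s) q).
Definition kC (c : Coexact Id A) (p q : term L (vset X)) :=
  proj1_sig (projT2 c) (rho p) = proj1_sig (projT2 c) (rho q).

Lemma uleq_k s2 s1 : uleq s2 s1 <-> (forall p q, kU s1 p q -> kU s2 p q).
Proof. by []. Qed.

Lemma cleq_k c2 c1 : cleq c2 c1 <-> (forall p q, kC c1 p q -> kC c2 p q).
Proof.
case: c1 => E1 [u1 [hom1 onto1 ex1]]; case: c2 => E2 [u2 [hom2 onto2 ex2]].
rewrite /kC /cleq /=; split.
  by case=> f [_ Hf] p q E; rewrite -!Hf E.
move=> H.
have key : forall a b, u1 a = u1 b -> u2 a = u2 b.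
  move=> a b; case: (rho_surj a) => p ->; case: (rho_surj b) => q ->; exact: H.
pose pre1 (e : E1) := proj1_sig (constructive_indefinite_description _ (onto1 e)).
have Hpre : forall e, u1 (pre1 e) = e.
  by move=> e; rewrite /pre1; case: constructive_indefinite_description.
exists (fun e => u2 (pre1 e)).
have Hfu : forall a, u2 (pre1 (u1 a)) = u2 a by move=> a; apply: key; rewrite Hpre.
split => // o es.
pose bs i := pre1 (es i).
have Ees : es = (fun i => u1 (bs i)).
  by apply: functional_extensionality => i; rewrite /bs Hpre.
rewrite Ees -hom1 Hfu hom2; f_equal; apply: functional_extensionality => i; by rewrite Hfu.
Qed.

Section Phi.
Variable s : Unif Id S X.
Let sf := proj1_sig s.
Definition gPhi : seq (free Id nat) := List.map (fun x => hV Id (sf x)) (enumX X).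

Lemma sg_Phi p : sg gPhi (hV Id (tsubst sf p)).
Proof.
elim: p => [x|o ts IH] /=.
  move=> P HP _; apply: HP; rewrite /gPhi; apply: List.in_map; exact: enumX_all.
rewrite hV_hom; exact: sg_closed.
Qed.

Definition preA (a : A) : term L (vset X) :=
  proj1_sig (constructive_indefinite_description _ (rho_surj a)).
Lemma preA_spec a : a = rho (preA a).
Proof. rewrite /preA; by case: constructive_indefinite_description. Qed.

Definition uPhi (a : A) : subalg gPhi :=
  exist _ (hV Id (tsubst sf (preA a))) (sg_Phi (preA a)).

Lemma uPhi_rho p : proj1_sig (uPhi (rho p)) = hV Id (tsubst sf p).
Proof. rewrite /=; apply: rho_ker; [exact: proj2_sig s | by rewrite -preA_spec]. Qed.

Lemma uPhi_hom : is_hom uPhi.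
Proof.
move=> o a; apply: sig_eqP.
pose ps i := preA (a i).
have Ea : a = (fun i => rho (ps i)).
  by apply: functional_extensionality => i; rewrite /ps -preA_spec.
rewrite Ea -rho_hom uPhi_rho hV_hom.
transitivity (@interp _ (free Id nat) o (fun i => proj1_sig (uPhi (rho (ps i))))); last by [].
f_equal; apply: functional_extensionality => i; by rewrite uPhi_rho.
Qed.

Lemma uPhi_onto y : exists x, uPhi x = y.
Proof.
case: y => v Hv.
have [p Ep] : exists p, v = hV Id (tsubst sf p).
  apply: (Hv (fun v => exists p, v = hV Id (tsubst sf p))).
    move=> y /List.in_map_iff [x [<- _]]; by exists (Var L x).
  move=> o a Ha; case: (choiceF Ha) => ps Hps; exists (App ps).
  transitivity (@interp _ (free Id nat) o (fun i => hV Id (tsubst sf (ps i)))).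
    f_equal; exact: functional_extensionality.
  by rewrite -hV_hom.
exists (rho p); apply: sig_eqP; by rewrite uPhi_rho.
Qed.

Lemma uPhi_exact : exact Id (subalg gPhi).
Proof. exists gPhi, id; split => //; by exists id. Qed.

Definition Phi : Coexact Id A :=
  existT _ (subalg gPhi) (exist _ uPhi (And3 uPhi_hom uPhi_onto uPhi_exact)).

Lemma kPhi p q : kC Phi p q <-> kU s p q.
Proof.
rewrite /kC /kU /=; split.
  by move=> E; rewrite -!uPhi_rho E.
by move=> E; apply: sig_eqP; rewrite !uPhi_rho.
Qed.
End Phi.

Section Psi.
Variable c : Coexact Id A.

Lemma Psi_ex : exists w : A -> free Id nat,
  (forall o (a : 'I_(arity o) -> A),
     w (@interp _ A o a) = @interp _ (free Id nat) o (fun i => w (a i))) /\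
  (forall a b, w a = w b <-> proj1_sig (projT2 c) a = proj1_sig (projT2 c) b).
Proof.
case: c => E [u [Hh Ho [g [f [Hf Hb]]]]] /=.
exists (fun a => proj1_sig (f (u a))); split.
  by move=> o a; rewrite Hh Hf.
move=> a b; split; last by move=> ->.
by move/sig_eqP/(bij_inj Hb).
Qed.

Definition wPsi : A -> free Id nat :=
  proj1_sig (constructive_indefinite_description _ Psi_ex).
Lemma wPsi_spec :
  (forall o (a : 'I_(arity o) -> A),
     wPsi (@interp _ A o a) = @interp _ (free Id nat) o (fun i => wPsi (a i))) /\
  (forall a b, wPsi a = wPsi b <-> proj1_sig (projT2 c) a = proj1_sig (projT2 c) b).
Proof. rewrite /wPsi; by case: constructive_indefinite_description. Qed.

Definition sPsi (x : vset X) : term L nat := qrep (wPsi (rho (Var L x))).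

Lemma hV_sPsi p : hV Id (tsubst sPsi p) = wPsi (rho p).
Proof.
elim: p => [x|o ts IH] /=.
  exact: (@qcls_qrep _ (term_alg L nat) (@Vequiv L Id nat)).
rewrite hV_hom rho_hom (proj1 wPsi_spec); f_equal; exact: functional_extensionality.
Qed.

Lemma sPsi_unif : is_unifier Id S sPsi.
Proof.
move=> p q /rho_S E; apply/hV_eq; by rewrite !hV_sPsi E.
Qed.

Definition Psi : Unif Id S X := exist _ sPsi sPsi_unif.

Lemma kPsi p q : kU Psi p q <-> kC c p q.
Proof. rewrite /kU /kC /= !hV_sPsi; exact: (proj2 wPsi_spec). Qed.
End Psi.

Lemma core_types t : has_type (@uleq L Id S X) t <-> has_type (@cleq L Id A) t.
Proof.
apply: (kernel_transfer (kP := kU) (kQ := kC) uleq_k cleq_k (F := Phi) (G := Psi)).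
- exact: kPhi.
- exact: kPsi.
Qed.

Lemma core_inh : inhabited (Unif Id S X) <-> inhabited (Coexact Id A).
Proof. by split; case=> x; constructor; [exact: Phi x | exact: Psi x]. Qed.
End Core.

Section FpS.
Variables (L : language) (Id : term L nat -> term L nat -> Prop)
  (S : seq (term L nat * term L nat)) (X : seq nat).

Definition piF (p : term L (vset X)) : Fp Id S X :=
  @qcls _ (free Id (vset X)) (Cg (@Sigma_pairs L Id S X)) (hV Id p).

Let CgR := Cg (@Sigma_pairs L Id S X).
Let Cr := @Cg_r L (free Id (vset X)) (@Sigma_pairs L Id S X).
Let Cs := @Cg_s L (free Id (vset X)) (@Sigma_pairs L Id S X).
Let Ct := @Cg_t L (free Id (vset X)) (@Sigma_pairs L Id S X).

Lemma piF_hom o (ts : 'I_(arity o) -> term L (vset X)) :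
  piF (App ts) = @interp _ (Fp Id S X) o (fun i => piF (ts i)).
Proof.
transitivity (@qcls _ (free Id (vset X)) CgR
   (@interp _ (free Id (vset X)) o (fun i => qrep (piF (ts i))))); last by [].
apply/(qcls_eq Cr Cs Ct); rewrite hV_hom.
case: (@Cg_cong L (free Id (vset X)) (@Sigma_pairs L Id S X)) => _ _ _ Hm.
apply: Hm => i; apply: Cs; exact: (qrep_qcls Cr Cs).
Qed.

Lemma piF_surj c : exists p, c = piF p.
Proof.
case: (qcls_surj c) => a ->; case: (hV_surj a) => t ->; by exists t.
Qed.

Lemma piF_S p q : List.In (rename (@vval X) p, rename (@vval X) q) S -> piF p = piF q.
Proof. move=> H; apply/(qcls_eq Cr Cs Ct); apply: Cg_incl; by exists p, q. Qed.

Lemma piF_ker (s : vset X -> term L nat) : is_unifier Id S s -> forall p q,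
  piF p = piF q -> hV Id (tsubst s p) = hV Id (tsubst s q).
Proof.
move=> Hs p q /(qcls_eq Cr Cs Ct) H.
have K1 : forall t, hV Id (tsubst s (qrep (hV Id t))) = hV Id (tsubst s t).
  by move=> t; apply/hV_eq; apply: V_subst; exact: hV_qrep.
rewrite -K1 -(K1 q).
apply: (H (fun x y => hV Id (tsubst s (qrep x)) = hV Id (tsubst s (qrep y)))).
  split.
  - by [].
  - by move=> x y ->.
  - by move=> x y z -> ->.
  move=> o a b Hab.
  change (hV Id (tsubst s (qrep (hV Id (App (fun i => qrep (a i)))))) =
          hV Id (tsubst s (qrep (hV Id (App (fun i => qrep (b i))))))).
  rewrite !K1.
  change (hV Id (App (fun i => tsubst s (qrep (a i)))) =
          hV Id (App (fun i => tsubst s (qrep (b i))))).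
  rewrite !hV_hom; f_equal; exact: functional_extensionality.
move=> x y [p' [q' [Hin -> ->]]]; rewrite !K1; apply/hV_eq; exact: Hs.
Qed.

Lemma fp_core (A : algebra L) (h : Fp Id S X -> A) : is_hom h -> bijective h ->
  (forall t, has_type (@uleq L Id S X) t <-> has_type (@cleq L Id A) t) /\
  (inhabited (Unif Id S X) <-> inhabited (Coexact Id A)).
Proof.
move=> Hh Hb.
have r_hom : forall o (ts : 'I_(arity o) -> term L (vset X)),
    h (piF (App ts)) = @interp _ A o (fun i => h (piF (ts i))).
  by move=> o ts; rewrite piF_hom Hh.
have r_surj : forall a, exists p, a = h (piF p).
  move=> a; case: Hb => g _ Hg; case: (piF_surj (g a)) => p Ep.
  by exists p; rewrite -Ep Hg.
have r_ker : forall (s : vset X -> term L nat), is_unifier Id S s -> forall p q,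
    h (piF p) = h (piF q) -> hV Id (tsubst s p) = hV Id (tsubst s q).
  by move=> s Hs p q /(bij_inj Hb); apply: piF_ker.
have r_S : forall p q, List.In (rename (@vval X) p, rename (@vval X) q) S ->
    h (piF p) = h (piF q).
  by move=> p q /piF_S ->.
split; [exact: (core_types r_hom r_surj r_ker r_S) | exact: (core_inh r_hom r_surj r_ker r_S)].
Qed.
End FpS.

Section Part2.
Variables (L : language) (Id : term L nat -> term L nat -> Prop).

Lemma unif_inh (S : seq (term L nat * term L nat)) X :
  unifiable Id S -> inhabited (Unif Id S X).
Proof.
case=> s Hs; constructor; exists (fun x => s (vval x)).
move=> p q /Hs /=; by rewrite !tsubst_rename.
Qed.

Lemma restrict X (t : term L nat) :
  (forall x, occurs x t -> x \in X) -> exists p : term L (vset X), rename (@vval X) p = t.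
Proof.
elim: t => [n|o ts IH] H.
  have Hn : n \in X by apply: H.
  by exists (Var L (exist _ n Hn)).
have : forall i, exists p : term L (vset X), rename (@vval X) p = ts i.
  move=> i; apply: IH => x Hx; apply: H; by exists i.
case/choiceF => ps Hps; exists (App ps).
change (App (fun i => rename (@vval X) (ps i)) = App ts).
f_equal; exact: functional_extensionality.
Qed.

Lemma inh_unif (S : seq (term L nat * term L nat)) X :
  (forall x, sig_vars S x -> x \in X) -> inhabited (Unif Id S X) -> unifiable Id S.
Proof.
move=> HV [[sg Hsg]].
pose s n := match (insub n : option (vset X)) with Some x => sg x | None => Var L n end.
have Hs : forall x, s (vval x) = sg x.
  by case=> n Hn; rewrite /s /= (insubT (fun n => n \in X) Hn).
exists s => -[a b] Hin /=.
case: (@restrict X a) => [x Hx|p Ep]; first by apply: HV; exists (a, b); split => //; left.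
case: (@restrict X b) => [x Hx|q Eq]; first by apply: HV; exists (a, b); split => //; right.
rewrite -Ep -Eq !tsubst_rename.
have -> : (fun y => s (vval y)) = sg by apply: functional_extensionality.
apply: Hsg; by rewrite Ep Eq.
Qed.

Definition Sx (S : seq (term L nat * term L nat)) (X : seq nat) :=
  List.app S (List.map (fun x => (Var L x, Var L x)) X).

Lemma Sx_vars S X : (forall x, sig_vars S x -> x \in X) ->
  forall x, x \in X <-> sig_vars (Sx S X) x.
Proof.
move=> HV x; split.
  move=> Hx; exists (Var L x, Var L x); split => /=; last by left.
  apply: List.in_or_app; right; apply/List.in_map_iff; exists x; split => //.
  elim: X Hx {HV} => [|a X IH] //; rewrite in_cons => /orP [/eqP ->|/IH]; by [left | right].
case=> pq [Hin0 Ho]; case: (List.in_app_or _ _ _ Hin0) => Hin.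
  by apply: HV; exists pq.
case/List.in_map_iff: Hin => y [E Hy]; subst pq.
have Hyx : y = x by case: Ho.
subst y; clear Hin0; elim: X Hy {HV} => [|a X IH] //= [->|/IH H]; rewrite in_cons ?eqxx //.
by rewrite H orbT.
Qed.

Lemma Sx_unif S X : unifiable Id S -> unifiable Id (Sx S X).
Proof.
case=> s Hs; exists s => pq Hin; case: (List.in_app_or _ _ _ Hin) => [/Hs //|].
by case/List.in_map_iff => x [<- _].
Qed.

Lemma Sx_types S X t :
  has_type (@uleq L Id (Sx S X) X) t <-> has_type (@uleq L Id S X) t.
Proof.
have F1 : forall s : Unif Id (Sx S X) X, is_unifier Id S (proj1_sig s).
  move=> [s Hs] p q Hin; apply: Hs; apply: List.in_or_app; by left.
have G1 : forall s : Unif Id S X, is_unifier Id (Sx S X) (proj1_sig s).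
  move=> [s Hs] p q Hin; case: (List.in_app_or _ _ _ Hin) => [/Hs //|].
  case/List.in_map_iff => x [[Ep Eq] _]; clear Hin.
  case: p Ep => [y|o a] //= [Ey]; case: q Eq => [z|o a] //= [Ez].
  have -> : y = z by apply: sig_eqP; change (vval y = vval z); rewrite -Ey -Ez.
  exact: V_refl.
apply: (@kernel_transfer _ _ _ _ _ (@kU L Id (Sx S X) X) (@kU L Id S X)
          (fun _ _ => iff_refl _) (fun _ _ => iff_refl _)
          (fun s => exist _ (proj1_sig s) (F1 s)) (fun s => exist _ (proj1_sig s) (G1 s))).
- by [].
- by [].
Qed.
End Part2.

Theorem theorem3p6 (L : language) (HL : finite_language L)
    (Id : term L nat -> term L nat -> Prop) :
  (forall (S : seq (term L nat * term L nat)) (X : seq nat),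
     unifiable Id S ->
     (forall x, sig_vars S x -> x \in X) ->
     forall t : utype,
       has_type (@uleq L Id S X) t <-> has_type (@cleq L Id (Fp Id S X)) t) /\
  (forall t : utype, exact_type Id t <-> alg_exact_type Id t).
Proof.
have P1 : forall S X, (forall t, has_type (@uleq L Id S X) t <->
                                 has_type (@cleq L Id (Fp Id S X)) t) /\
                      (inhabited (Unif Id S X) <-> inhabited (Coexact Id (Fp Id S X))).
  move=> S X; apply: (@fp_core L Id S X (Fp Id S X) id) => //; by exists id.
split; first by move=> S X _ _ t; apply: (proj1 (P1 S X)).
have fpS : forall S X, (forall x, x \in X <-> sig_vars S x) -> is_fp Id (Fp Id S X).
  move=> S X HX; exists S, X; split; first by move=> x /HX.
  exists id; split => //; by exists id.
have toS : forall A, is_fp Id A -> inhabited (Coexact Id A) ->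
    exists S X, [/\ unifiable Id S, (forall x, x \in X <-> sig_vars S x) &
      forall t, has_type (@uleq L Id S X) t <-> has_type (@cleq L Id A) t].
  move=> A [S [X [HV [h [Hh Hb]]]]] HA.
  case: (fp_core Hh Hb) => Ht Hi.
  exists (Sx S X), X; split.
  - apply: Sx_unif; apply: (inh_unif HV); exact/Hi.
  - exact: Sx_vars.
  - by move=> t; rewrite Sx_types.
move=> t; split.
- case=> [[S [X [Hu HX Ht]]] Hb]; split.
    exists (Fp Id S X); split.
    + exact: fpS.
    + apply/(proj2 (P1 S X)); exact: unif_inh.
    + exact/(proj1 (P1 S X)).
  move=> A t' Hfp HA Ht'.
  case: (toS A Hfp HA) => S' [X' [Hu' HX' Ht2]].
  apply: (Hb S' X' t' Hu' HX'); exact/Ht2.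
- case=> [[A [Hfp HA Ht]] Hb]; split.
    case: (toS A Hfp HA) => S' [X' [Hu' HX' Ht2]].
    exists S', X'; split => //; exact/Ht2.
  move=> S X t' Hu HX Ht'.
  apply: (Hb (Fp Id S X) t' (fpS S X HX)).
  + apply/(proj2 (P1 S X)); exact: unif_inh.
  + exact/(proj1 (P1 S X)).
Qed.
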